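(* Let $\Upsilon$ be a $\delta$--hyperbolic geodesic metric space and let $m,\epsilon>0$ and $c\ge 0$ be real numbers. There exists a constant $\epsilon'$ such that for any finite or countably infinite collection of subsets $\{X_i\}_{i=1}^{\Lambda}$ of $\Upsilon$ satisfying (1) each $X_i$ is $\epsilon$--quasi-convex; (2) $X_i\cap X_{i+1}\neq\emptyset$ for each $i$; (3) for all $i,j$ and all $x\in X_i$, $y\in X_j$, $d(x,y)\ge m(|i-j|-c)$, the union $\bigcup_i X_i$ is $\epsilon'$--quasi-convex.
   Context: $\delta$--hyperbolic means geodesic triangles are $\delta$--slim. A subset $Z$ is $\epsilon$--quasi-convex if every geodesic joining two points of $Z$ lies in the $\epsilon$--neighborhood of $Z$. The constant $\epsilon'$ depends only on $\delta,m,\epsilon,c$, not on the collection. *)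

(* Defs.v *)
From Stdlib Require Export Reals.
Open Scope R_scope.

Definition is_metric {X : Type} (d : X -> X -> R) : Prop :=
  (forall x y, 0 <= d x y) /\
  (forall x y, d x y = 0 <-> x = y) /\
  (forall x y, d x y = d y x) /\
  (forall x y z, d x z <= d x y + d y z).

(* g restricted to [0, L] is a geodesic segment from x to y
   (an isometric embedding of [0, d x y]). *)
Definition geodesic_seg {X : Type} (d : X -> X -> R)
    (g : R -> X) (x y : X) : Prop :=
  g 0 = x /\ g (d x y) = y /\
  forall s t, 0 <= s <= d x y -> 0 <= t <= d x y -> d (g s) (g t) = Rabs (s - t).

Definition on_seg {X : Type} (d : X -> X -> R) (g : R -> X) (x y p : X) : Prop :=
  exists t, 0 <= t <= d x y /\ p = g t.

Definition geodesic_space {X : Type} (d : X -> X -> R) : Prop :=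
  forall x y, exists g, geodesic_seg d g x y.

Definition in_nbhd {X : Type} (d : X -> X -> R) (r : R) (Z : X -> Prop) (p : X) : Prop :=
  exists z, Z z /\ d p z <= r.

Definition hyperbolic {X : Type} (d : X -> X -> R) (delta : R) : Prop :=
  forall (x y z : X) (gxy gyz gxz : R -> X),
    geodesic_seg d gxy x y -> geodesic_seg d gyz y z -> geodesic_seg d gxz x z ->
    forall p, on_seg d gxy x y p ->
      in_nbhd d delta (fun q => on_seg d gyz y z q \/ on_seg d gxz x z q) p.

Definition quasi_convex {X : Type} (d : X -> X -> R) (eps : R) (Z : X -> Prop) : Prop :=
  forall x y g, Z x -> Z y -> geodesic_seg d g x y ->
    forall p, on_seg d g x y p -> in_nbhd d eps Z p.

(* Index range of a collection {X_i}: Some n = finite collection with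
   indices 0..n-1; None = countably infinite collection indexed by nat. *)
Definition in_range (Lam : option nat) (i : nat) : Prop :=
  match Lam with Some n => (i < n)%nat | None => True end.

(* Main.v *)
Require Import Defs.
From Stdlib Require Import Reals Lra Lia Psatz Arith.
Open Scope R_scope.

Definition Uof {Y : Type} (Lam : option nat) (Xs : nat -> Y -> Prop) (p : Y) : Prop :=
  exists i, in_range Lam i /\ Xs i p.

Lemma seg_dist {Y} (d : Y -> Y -> R) g x y s :
  is_metric d -> geodesic_seg d g x y -> 0 <= s <= d x y ->
  d x (g s) = s /\ d (g s) y = d x y - s.
Proof.
  intros [H0 [H1 [H2 H3]]] [Hg0 [Hg1 Hg]] Hs.
  split.
  - rewrite <- Hg0 at 1. rewrite Hg by lra. rewrite Rabs_left1 by lra. lra.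
  - rewrite <- Hg1 at 1. rewrite Hg by lra. rewrite Rabs_left1 by lra. lra.
Qed.

Lemma in_range_le Lam i k : in_range Lam i -> (k <= i)%nat -> in_range Lam k.
Proof. destruct Lam; simpl; lia. Qed.

Lemma nbhd_mono {Y} (d : Y -> Y -> R) r r' Z p :
  r <= r' -> in_nbhd d r Z p -> in_nbhd d r' Z p.
Proof. intros H [z [Hz Hd]]. exists z. split; auto. lra. Qed.

Lemma pow2_INR n : INR (2 ^ n) = 2 ^ n.
Proof. rewrite pow_INR. replace (INR 2) with 2 by (simpl; lra). reflexivity. Qed.

Lemma sq_le_pow2 N : (4 <= N)%nat -> (N * N <= 2 ^ N)%nat.
Proof.
  induction N as [|N IH]; intros H. lia.
  destruct (Nat.eq_dec N 3) as [->|Hn]. simpl. lia.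
  specialize (IH ltac:(lia)). rewrite Nat.pow_succ_r'. nia.
Qed.

Lemma growth a b : 0 <= a -> 0 <= b ->
  exists M0, forall N, (M0 <= N)%nat -> a + b * INR N <= 2 ^ N.
Proof.
  intros Ha Hb. destruct (INR_unbounded (a + b + 4)) as [n0 Hn0].
  exists n0. intros N HN.
  assert (HNr : INR n0 <= INR N) by (apply le_INR; auto).
  assert (H4 : (4 <= N)%nat).
  { destruct (le_lt_dec 4 N) as [|Hl]; auto. apply lt_INR in Hl. simpl in Hl. lra. }
  pose proof (sq_le_pow2 N H4) as Hs. apply le_INR in Hs.
  rewrite mult_INR, pow2_INR in Hs. nra.
Qed.

Lemma pow2_unbounded X : exists n, X < 2 ^ n.
Proof.
  destruct (INR_unbounded X) as [n Hn]. exists n.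
  assert (H : (n < 2 ^ n)%nat) by (apply Nat.pow_gt_lin_r; lia).
  apply lt_INR in H. rewrite pow2_INR in H. lra.
Qed.

Lemma absINR k l P : Rabs (INR k - INR l) < INR P -> (k - l < P)%nat /\ (l - k < P)%nat.
Proof.
  intros H. assert (HP : (0 < P)%nat).
  { apply INR_lt. simpl. pose proof (Rabs_pos (INR k - INR l)). lra. }
  destruct (le_lt_dec k l) as [Hkl|Hkl].
  - rewrite Rabs_minus_sym, <- minus_INR, Rabs_right in H by (auto; apply Rle_ge, pos_INR).
    apply INR_lt in H. lia.
  - rewrite <- minus_INR, Rabs_right in H by (try lia; apply Rle_ge, pos_INR).
    apply INR_lt in H. lia.
Qed.

Lemma chain {Y} (d : Y -> Y -> R) delta eps Lam (Xs : nat -> Y -> Prop) :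
  is_metric d -> geodesic_space d -> hyperbolic d delta -> 0 <= delta ->
  (forall i, in_range Lam i -> quasi_convex d eps (Xs i)) ->
  (forall i, in_range Lam i -> in_range Lam (S i) -> exists p, Xs i p /\ Xs (S i) p) ->
  forall h i j, in_range Lam i -> in_range Lam j ->
  (i - j < 2 ^ h)%nat -> (j - i < 2 ^ h)%nat ->
  forall x y g, Xs i x -> Xs j y -> geodesic_seg d g x y ->
  forall p, on_seg d g x y p -> in_nbhd d (eps + INR h * delta) (Uof Lam Xs) p.
Proof.
  intros Hm Hgeo Hhyp Hd Hqc Hcons h.
  pose proof Hm as [Hm0 [Hm1 [Hm2 Hm3]]].
  induction h as [|h IH]; intros i j Hi Hj Hij Hji x y g Hx Hy Hg p Hp.
  - simpl in Hij, Hji. assert (i = j) by lia. subst j.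
    destruct (Hqc i Hi x y g Hx Hy Hg p Hp) as [z [Hz Hdz]].
    exists z. split. exists i; auto. simpl. lra.
  - rewrite Nat.pow_succ_r' in Hij, Hji.
    set (P := (2 ^ h)%nat) in *.
    assert (HP : (1 <= P)%nat) by (subst P; pose proof (Nat.pow_le_mono_r 2 0 h ltac:(lia) ltac:(lia)); simpl in *; lia).
    destruct (Nat.lt_ge_cases (i - j) P) as [H1|H1];
      [destruct (Nat.lt_ge_cases (j - i) P) as [H2|H2]|].
    1: { apply nbhd_mono with (r := eps + INR h * delta); [rewrite S_INR; nra | exact (IH i j Hi Hj H1 H2 x y g Hx Hy Hg p Hp)]. }
    all: set (lo := Nat.min i j); set (hi := Nat.max i j); set (a := (lo + P - 1)%nat).
    all: assert (Hhi : in_range Lam hi) by (unfold hi; destruct (Nat.max_spec i j) as [[_ ->]|[_ ->]]; auto).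
    all: assert (Ha : in_range Lam a) by (apply (in_range_le Lam hi); auto; unfold a, lo, hi; lia).
    all: assert (Ha1 : in_range Lam (S a)) by (apply (in_range_le Lam hi); auto; unfold a, lo, hi; lia).
    all: destruct (Hcons a Ha Ha1) as [p0 [Hp0a Hp0b]].
    all: assert (Hch : forall e, (e = i \/ e = j) -> exists f, in_range Lam f /\ Xs f p0 /\
                   (e - f < P)%nat /\ (f - e < P)%nat).
    all: try (intros e He; destruct (le_lt_dec e a);
           [exists a; repeat split; auto; unfold a, lo, hi in *; lia
           |exists (S a); repeat split; auto; unfold a, lo, hi in *; lia]).
    all: destruct (Hch i (or_introl eq_refl)) as [fi [Hfi [Xfi [Hfi1 Hfi2]]]].
    all: destruct (Hch j (or_intror eq_refl)) as [fj [Hfj [Xfj [Hfj1 Hfj2]]]].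
    all: destruct (Hgeo x p0) as [gxp Hgxp]; destruct (Hgeo y p0) as [gyp Hgyp].
    all: destruct (Hhyp x y p0 g gyp gxp Hg Hgyp Hgxp p Hp) as [q [Hq Hpq]].
    all: destruct Hq as [Hq|Hq].
    all: try (destruct (IH j fj Hj Hfj Hfj1 Hfj2 y p0 gyp Hy Xfj Hgyp q Hq) as [u [Hu Hqu]]).
    all: try (destruct (IH i fi Hi Hfi Hfi1 Hfi2 x p0 gxp Hx Xfi Hgxp q Hq) as [u [Hu Hqu]]).
    all: exists u; split; auto; rewrite S_INR; pose proof (Hm3 p q u); nra.
Qed.

Lemma step {Y} (d : Y -> Y -> R) delta m eps c Lam (Xs : nat -> Y -> Prop) :
  is_metric d -> geodesic_space d -> hyperbolic d delta -> 0 <= delta -> 0 < m -> 0 <= eps ->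
  (forall i, in_range Lam i -> quasi_convex d eps (Xs i)) ->
  (forall i, in_range Lam i -> in_range Lam (S i) -> exists p, Xs i p /\ Xs (S i) p) ->
  (forall i j x y, in_range Lam i -> in_range Lam j -> Xs i x -> Xs j y ->
           d x y >= m * (Rabs (INR i - INR j) - c)) ->
  forall x y g, Uof Lam Xs x -> Uof Lam Xs y -> geodesic_seg d g x y ->
  forall D h, 0 <= D -> 6 * D < m * (INR (2 ^ h) - c) ->
  (forall s, 0 <= s <= d x y -> in_nbhd d D (Uof Lam Xs) (g s)) ->
  forall t, 0 <= t <= d x y -> in_nbhd d (4 * delta + eps + INR h * delta) (Uof Lam Xs) (g t).
Proof.
  intros Hm Hgeo Hhyp Hd Hmp He Hqc Hcons Hsep x y g Hx Hy Hg D h HD Hh HP t Ht.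
  pose proof Hm as [Hm0 [Hm1 [Hm2 Hm3]]].
  pose proof Hg as [Hg0 [Hg1 Hgi]].
  pose proof (pos_INR h) as Hhpos.
  assert (Hrad : 0 <= INR h * delta) by nra.
  assert (HA : exists sa u, 0 <= sa <= t /\ t - sa <= 2 * D /\ Uof Lam Xs u /\
              d (g sa) u <= t - sa /\ d (g sa) u <= D).
  { destruct (Rle_dec (t - 2 * D) 0).
    - exists 0, x. rewrite Hg0. assert (d x x = 0) by (apply Hm1; auto).
      repeat split; auto; lra.
    - destruct (HP (t - 2 * D) ltac:(lra)) as [u [Hu Hdu]].
      exists (t - 2 * D), u. repeat split; auto; lra. }
  assert (HB : exists sb v, t <= sb <= d x y /\ sb - t <= 2 * D /\ Uof Lam Xs v /\
              d (g sb) v <= sb - t /\ d (g sb) v <= D).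
  { destruct (Rle_dec (d x y) (t + 2 * D)).
    - exists (d x y), y. rewrite Hg1. assert (d y y = 0) by (apply Hm1; auto).
      repeat split; auto; lra.
    - destruct (HP (t + 2 * D) ltac:(lra)) as [v [Hv Hdv]].
      exists (t + 2 * D), v. repeat split; auto; lra. }
  destruct HA as [sa [u [Hsa [Hsa2 [[k [Hk Hu]] [Hau1 Hau2]]]]]].
  destruct HB as [sb [v [Hsb [Hsb2 [[l [Hl Hv]] [Hbv1 Hbv2]]]]]].
  set (a := g sa) in *. set (b := g sb) in *. set (z := g t).
  assert (Hab : d a b = sb - sa) by (unfold a, b; rewrite Hgi by lra; rewrite Rabs_left1 by lra; lra).
  assert (Haz : d a z = t - sa) by (unfold a, z; rewrite Hgi by lra; rewrite Rabs_left1 by lra; lra).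
  assert (Hbz : d b z = sb - t) by (unfold b, z; rewrite Hgi by lra; rewrite Rabs_right by lra; lra).
  assert (Huv : d u v <= 6 * D).
  { pose proof (Hm3 u a v). pose proof (Hm3 a b v). rewrite (Hm2 u a) in *. lra. }
  pose proof (Hsep k l u v Hk Hl Hu Hv) as Hs.
  assert (Hkl : Rabs (INR k - INR l) < INR (2 ^ h)).
  { apply (Rmult_lt_reg_l m); auto. nra. }
  apply absINR in Hkl as [Hkl1 Hkl2].
  set (g' := fun s => g (sa + s)).
  assert (Hg' : geodesic_seg d g' a b).
  { unfold g'. split; [|split].
    - rewrite Rplus_0_r. reflexivity.
    - rewrite Hab. replace (sa + (sb - sa)) with sb by ring. reflexivity.
    - intros s1 s2 Hs1 Hs2. rewrite Hab in Hs1, Hs2. rewrite Hgi by lra. f_equal. ring. }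
  assert (Hz : on_seg d g' a b z).
  { exists (t - sa). split. rewrite Hab. lra. unfold g', z. f_equal. ring. }
  destruct (Hgeo b v) as [gbv Hgbv]. destruct (Hgeo a v) as [gav Hgav].
  destruct (Hgeo v u) as [gvu Hgvu]. destruct (Hgeo a u) as [gau Hgau].
  destruct (Hhyp a b v g' gbv gav Hg' Hgbv Hgav z Hz) as [q [Hq Hzq]].
  destruct Hq as [[s0 [Hs0 ->]]|Hq].
  - destruct (seg_dist d gbv b v s0 Hm Hgbv Hs0) as [E1 E2].
    exists v. split. exists l; auto.
    pose proof (Hm3 b (gbv s0) z). pose proof (Hm3 z (gbv s0) v).
    rewrite (Hm2 (gbv s0) z) in *. lra.
  - destruct (Hhyp a v u gav gvu gau Hgav Hgvu Hgau q Hq) as [r [Hr Hqr]].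
    destruct Hr as [Hr|[s1 [Hs1 ->]]].
    + destruct (chain d delta eps Lam Xs Hm Hgeo Hhyp Hd Hqc Hcons h l k Hl Hk Hkl2 Hkl1
                  v u gvu Hv Hu Hgvu r Hr) as [w [Hw Hrw]].
      exists w. split; auto.
      pose proof (Hm3 z q r). pose proof (Hm3 z r w). lra.
    + destruct (seg_dist d gau a u s1 Hm Hgau Hs1) as [E1 E2].
      exists u. split. exists k; auto.
      pose proof (Hm3 a (gau s1) z). pose proof (Hm3 (gau s1) q z).
      pose proof (Hm3 z (gau s1) u). pose proof (Hm3 z q (gau s1)).
      rewrite (Hm2 q z) in *. rewrite (Hm2 (gau s1) q) in *. lra.
Qed.

Theorem theoremA3 (delta m eps c : R) :
  0 <= delta -> 0 < m -> 0 < eps -> 0 <= c ->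
  exists eps' : R,
    forall (Y : Type) (d : Y -> Y -> R),
      is_metric d -> geodesic_space d -> hyperbolic d delta ->
      forall (Lam : option nat) (Xs : nat -> Y -> Prop),
        (forall i, in_range Lam i -> quasi_convex d eps (Xs i)) ->
        (forall i, in_range Lam i -> in_range Lam (S i) ->
           exists p, Xs i p /\ Xs (S i) p) ->
        (forall i j x y, in_range Lam i -> in_range Lam j -> Xs i x -> Xs j y ->
           d x y >= m * (Rabs (INR i - INR j) - c)) ->
        quasi_convex d eps' (fun p => exists i, in_range Lam i /\ Xs i p).
Proof.
  intros Hd Hm He Hc.
  destruct (pow2_unbounded ((6 + m * c) / m)) as [A HA].
  assert (HA' : 6 + m * c < m * 2 ^ A).
  { assert (E : m * ((6 + m * c) / m) = 6 + m * c) by (field; lra). nra. }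
  destruct (growth (4 * delta + eps + (1 + INR A) * delta) delta) as [M0 HM0].
  { pose proof (pos_INR A). nra. } { lra. }
  exists (2 ^ M0).
  intros Y d Hmet Hgs Hhyp Lam Xs Hqc Hcons Hsep x y g Hx Hy Hg p [t [Ht ->]].
  pose proof Hmet as [Hm0 [Hm1 [Hm2 Hm3]]].
  set (P := fun D => forall s, 0 <= s <= d x y -> in_nbhd d D (Uof Lam Xs) (g s)).
  assert (Hit : forall k, P (2 ^ (M0 + k)) -> P (2 ^ M0)).
  { induction k as [|k IH]; intros HP.
    - rewrite Nat.add_0_r in HP. exact HP.
    - apply IH. intros s Hs.
      apply nbhd_mono with (r := 4 * delta + eps + INR (M0 + S k + A) * delta).
      + pose proof (HM0 (M0 + k)%nat ltac:(lia)) as H.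
        replace (M0 + S k + A)%nat with (M0 + k + 1 + A)%nat by lia.
        rewrite !plus_INR in *. change (INR 1) with 1. ring_simplify. ring_simplify in H. lra.
      + apply (step d delta m eps c Lam Xs Hmet Hgs Hhyp Hd Hm ltac:(lra) Hqc Hcons Hsep
                 x y g Hx Hy Hg (2 ^ (M0 + S k)) (M0 + S k + A)); auto.
        * apply pow_le; lra.
        * rewrite pow2_INR, (pow_add 2 (M0 + S k) A).
          assert (H1 : 1 <= 2 ^ (M0 + S k)) by (apply pow_R1_Rle; lra).
          assert (0 <= m * c) by (apply Rmult_le_pos; lra). set (X := 2 ^ (M0 + S k)) in *. nra. }
  destruct (pow2_unbounded (d x y)) as [n Hn].
  apply (Hit n); auto.
  intros s Hs. exists x. split; auto.
  destruct (seg_dist d g x y s Hmet Hg Hs) as [E1 _].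
  rewrite Hm2, E1.
  assert (2 ^ n <= 2 ^ (M0 + n)) by (apply Rle_pow; lia || lra).
  lra.
Qed.
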